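(* Let $G$ be a finite Abelian group given by its Cayley multiplication table, where each entry of the table can be accessed in constant time. There exists a deterministic algorithm that runs in time $\tilde O(|G|)$ and finds a set of generators $A$ of $G$ with $|A|\le\log|G|$.
   Context: $\tilde O$ hides polylogarithmic factors in $|G|$; $\log$ is base 2. *)

(* Defs.v *)
(* A simple unit-cost RAM model with oracle access to a
   Cayley table (each table lookup costs one step). *)
From mathcomp Require Import all_boot all_fingroup.
Set Implicit Arguments. Unset Strict Implicit. Unset Printing Implicit Defensive.

Inductive instr : Type :=
  | IConst of nat & nat
  | IAdd   of nat & nat & nat
  | ISub   of nat & nat & nat    (* ISub d a b   : r_d := r_a - r_b (truncated) *)
  | ILoad  of nat & nat
  | IStore of nat & nat
  | ITab   of nat & nat & nat
  | IJlt   of nat & nat & nat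
  | IJmp   of nat
  | IHalt.

Definition program := seq instr.

Record state := State { pc : nat; mem : nat -> nat }.

Definition upd (m : nat -> nat) (a v : nat) : nat -> nat :=
  fun x => if x == a then v else m x.

(* table oracle on nat labels; out-of-range queries return 0 *)
Definition tabN (n : nat) (tab : 'I_n -> 'I_n -> 'I_n) (a b : nat) : nat :=
  match @insub nat (fun x => x < n) 'I_n a, @insub nat (fun x => x < n) 'I_n b with
  | Some i, Some j => val (tab i j)
  | _, _ => 0
  end.

(* One step; None means the machine has halted (IHalt or pc out of range). *)
Definition step (P : program) (n : nat) (tab : 'I_n -> 'I_n -> 'I_n)
  (s : state) : option state :=
  let m := mem s in
  let next m' := Some (State (pc s).+1 m') in
  match nth IHalt P (pc s) with
  | IConst d v => next (upd m d v)
  | IAdd d a b => next (upd m d (m a + m b))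
  | ISub d a b => next (upd m d (m a - m b))
  | ILoad d a => next (upd m d (m (m a)))
  | IStore a s' => next (upd m (m a) (m s'))
  | ITab d a b => next (upd m d (tabN tab (m a) (m b)))
  | IJlt a b l => if m a < m b then Some (State l m) else next m
  | IJmp l => Some (State l m)
  | IHalt => None
  end.

(* run P tab t s = Some m  iff the machine halts within t steps (the final
   halting step included) with final memory m. *)
Fixpoint run (P : program) (n : nat) (tab : 'I_n -> 'I_n -> 'I_n)
  (fuel : nat) (s : state) : option (nat -> nat) :=
  match fuel with
  | 0 => None
  | fuel'.+1 =>
      match step P tab s with
      | None => Some (mem s)
      | Some s' => run P tab fuel' s'
      end
  end.

(* Initial state: pc = 0, r_0 = n (the group order), all other registers 0. *)
Definition init (n : nat) : state := State 0 (fun x => if x == 0 then n else 0).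

(* Main.v *)
Require Import Defs.
From mathcomp Require Import all_boot all_fingroup.
From mathcomp Require Import zify.
Set Implicit Arguments. Unset Strict Implicit. Unset Printing Implicit Defensive.

Fixpoint exec (P : program) n (tab : 'I_n -> 'I_n -> 'I_n) t s : option state :=
  if t is t'.+1 then (if step P tab s is Some s' then exec P tab t' s' else None)
  else Some s.

Lemma exec_run P n (tab : 'I_n -> 'I_n -> 'I_n) t s s' f :
  exec P tab t s = Some s' -> run P tab (t + f) s = run P tab f s'.
Proof.
elim: t s => [|t IH] s /=; first by case=> ->.
by case: (step P tab s) => // s1 /IH.
Qed.

Lemma run_halt P n (tab : 'I_n -> 'I_n -> 'I_n) f s : step P tab s = None -> run P tab f.+1 s = Some (Defs.mem s).
Proof. by move=> /= ->. Qed.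

Lemma exec_add P n (tab : 'I_n -> 'I_n -> 'I_n) t1 t2 s :
  exec P tab (t1 + t2) s = if exec P tab t1 s is Some s' then exec P tab t2 s' else None.
Proof.
elim: t1 s => [|t IH] s //=.
by case: (step P tab s) => // s1; rewrite IH.
Qed.

Definition reach P n (tab : 'I_n -> 'I_n -> 'I_n) s (Q : state -> Prop) b :=
  exists t s', t <= b /\ exec P tab t s = Some s' /\ Q s'.

Lemma reach_step P n (tab : 'I_n -> 'I_n -> 'I_n) s s1 Q b :
  step P tab s = Some s1 -> reach P tab s1 Q b -> reach P tab s Q b.+1.
Proof. by move=> H [t [s' [Ht [He HQ]]]]; exists t.+1, s'; rewrite /= H. Qed.

Lemma reach_done P n (tab : 'I_n -> 'I_n -> 'I_n) s (Q : state -> Prop) b :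
  Q s -> reach P tab s Q b.
Proof. by move=> H; exists 0, s. Qed.

Lemma reach_weaken P n (tab : 'I_n -> 'I_n -> 'I_n) s Q b b' :
  b <= b' -> reach P tab s Q b -> reach P tab s Q b'.
Proof. by move=> Hb [t [s' [Ht H]]]; exists t, s'; split => //; apply: leq_trans Hb. Qed.

Lemma reach_trans P n (tab : 'I_n -> 'I_n -> 'I_n) s Q R b1 b2 :
  reach P tab s Q b1 -> (forall s', Q s' -> reach P tab s' R b2) -> reach P tab s R (b1 + b2).
Proof.
move=> [t1 [s1 [H1 [E1 Q1]]]] /(_ _ Q1) [t2 [s2 [H2 [E2 R2]]]].
exists (t1 + t2), s2; split; first exact: leq_add.
by rewrite exec_add E1.
Qed.

Lemma reach_post P n (tab : 'I_n -> 'I_n -> 'I_n) s (Q R : state -> Prop) b :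
  reach P tab s Q b -> (forall s', Q s' -> R s') -> reach P tab s R b.
Proof. by move=> [t [s' [H1 [H2 H3]]]] HQR; exists t, s'; auto. Qed.

Section Steps.
Variables (P : program) (n : nat) (tab : 'I_n -> 'I_n -> 'I_n) (p : nat) (m : nat -> nat).
Lemma st_const d v : nth IHalt P p = IConst d v -> step P tab (State p m) = Some (State p.+1 (upd m d v)).
Proof. by rewrite /step /= => ->. Qed.
Lemma st_add d a b : nth IHalt P p = IAdd d a b -> step P tab (State p m) = Some (State p.+1 (upd m d (m a + m b))).
Proof. by rewrite /step /= => ->. Qed.
Lemma st_sub d a b : nth IHalt P p = ISub d a b -> step P tab (State p m) = Some (State p.+1 (upd m d (m a - m b))).
Proof. by rewrite /step /= => ->. Qed.
Lemma st_load d a : nth IHalt P p = ILoad d a -> step P tab (State p m) = Some (State p.+1 (upd m d (m (m a)))).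
Proof. by rewrite /step /= => ->. Qed.
Lemma st_store a s : nth IHalt P p = IStore a s -> step P tab (State p m) = Some (State p.+1 (upd m (m a) (m s))).
Proof. by rewrite /step /= => ->. Qed.
Lemma st_tab d a b : nth IHalt P p = ITab d a b -> step P tab (State p m) = Some (State p.+1 (upd m d (tabN tab (m a) (m b)))).
Proof. by rewrite /step /= => ->. Qed.
Lemma st_jmp l : nth IHalt P p = IJmp l -> step P tab (State p m) = Some (State l m).
Proof. by rewrite /step /= => ->. Qed.
Lemma st_jlt_t a b l : nth IHalt P p = IJlt a b l -> m a < m b -> step P tab (State p m) = Some (State l m).
Proof. by rewrite /step /= => -> ->. Qed.
Lemma st_jlt_f a b l : nth IHalt P p = IJlt a b l -> m b <= m a -> step P tab (State p m) = Some (State p.+1 m).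
Proof. by rewrite /step /= => -> H; rewrite ltnNge H. Qed.
Lemma st_halt : nth IHalt P p = IHalt -> step P tab (State p m) = None.
Proof. by rewrite /step /= => ->. Qed.
End Steps.

Ltac msimp := match goal with |- reach _ _ (State ?p ?m) _ _ => let m' := eval simpl in m in change m with m' end.
Ltac stp := apply: reach_step; [ first [ apply: st_const; reflexivity | apply: st_add; reflexivity
  | apply: st_sub; reflexivity | apply: st_load; reflexivity | apply: st_store; reflexivity
  | apply: st_tab; reflexivity | apply: st_jmp; reflexivity ] | msimp ].
Ltac jt := apply: reach_step; [ apply: st_jlt_t; [reflexivity | ] | ].
Ltac jf := apply: reach_step; [ apply: st_jlt_f; [reflexivity | ] | ].

Lemma updE m a v x : upd m a v x = if x == a then v else m x.
Proof. by []. Qed.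
Lemma upd_same m a v : upd m a v a = v.
Proof. by rewrite updE eqxx. Qed.
Lemma upd_other m a v x : x <> a -> upd m a v x = m x.
Proof. by move=> H; rewrite updE; case: eqP. Qed.

Ltac res_ifs := repeat match goal with
 | |- context [?x == ?y :> nat] => (have ->: (x == y) = false by apply/eqP; lia) || (have ->: (x == y) = true by apply/eqP; lia)
 end.
Ltac rd := rewrite /= ?updE /=; res_ifs.

Definition straight : seq instr :=
  flatten [seq [:: IConst (15 - j) (15 - j); IAdd (15 - j) (15 - j) 0; ILoad (15 - j) (15 - j)] | j <- iota 0 15].

Definition prog : program := [::
  IConst 11 1; IAdd 1 0 12; IConst 8 16; IAdd 6 8 1; IAdd 7 6 1; IAdd 13 7 1; IConst 4 0;
  (*7*) ITab 8 4 4; IJlt 8 4 11; IJlt 4 8 11; IJmp 13;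
  (*11*) IAdd 4 4 11; IJmp 7;
  (*13*) IAdd 8 6 4; IStore 8 11; IStore 7 4; IConst 3 1; IConst 2 0; IConst 4 0;
  (*19*) IJlt 4 1 21; IJmp 49;
  (*21*) IAdd 8 6 4; ILoad 9 8; IJlt 12 9 47;
  (*24*) IAdd 2 2 11; IAdd 8 13 2; IStore 8 4; IAdd 8 6 4; IStore 8 11; IAdd 8 7 3; IStore 8 4;
  (*31*) IAdd 3 3 11; IConst 5 0;
  (*33*) IJlt 5 3 35; IJmp 47;
  (*35*) IAdd 8 7 5; ILoad 9 8; ITab 9 9 4; IAdd 8 6 9; ILoad 10 8; IAdd 5 5 11; IJlt 12 10 33;
  (*42*) IStore 8 11; IAdd 8 7 3; IStore 8 9; IAdd 3 3 11; IJmp 33;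
  (*47*) IAdd 4 4 11; IJmp 19;
  (*49*) IAdd 0 13 12; IStore 0 2; IAdd 5 2 12;
  (*52*) IConst 8 15; IJlt 8 5 55; IJmp 60;
  (*55*) IAdd 9 0 5; ILoad 10 9; IStore 5 10; ISub 5 5 11; IJmp 52] ++ straight ++ [:: ILoad 0 0; IHalt].

Lemma prog_size : size prog = 107. Proof. by []. Qed.
Lemma prog105 : nth IHalt prog 105 = ILoad 0 0. Proof. by []. Qed.

Definition Pre n (m : nat -> nat) := m 1 = n /\ m 6 = 16+n /\ m 7 = 16+n+n /\ m 11 = 1 /\ m 12 = 0 /\
   m 13 = 16+n+n+n /\ (forall a, 16 <= a -> m a = 0).

Lemma phaseA n (tab : 'I_n -> 'I_n -> 'I_n) :
  reach prog tab (init n) (fun s => pc s = 7 /\ Pre n (Defs.mem s) /\ Defs.mem s 4 = 0) 7.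
Proof.
rewrite /init.
do 7 stp.
apply: reach_done; rewrite /= /Pre /upd /=.
split=> //; split; last by [].
do 6 (split; first by lia).
move=> a Ha; res_ifs; by [].
Qed.

Lemma Pre_upd n m d v : d < 16 -> d <> 1 -> d <> 6 -> d <> 7 -> d <> 11 -> d <> 12 -> d <> 13 ->
  Pre n m -> Pre n (upd m d v).
Proof.
move=> H0 H1 H2 H3 H4 H5 H6 [E1 [E2 [E3 [E4 [E5 [E6 E7]]]]]].
rewrite /Pre !updE; res_ifs; do 6 (split; first by []).
move=> a Ha; rewrite updE; res_ifs; exact: E7.
Qed.

Lemma tabN_ord n (tab : 'I_n -> 'I_n -> 'I_n) (i j : 'I_n) : tabN tab i j = tab i j.
Proof. by rewrite /tabN !valK. Qed.


Section Final.
Variables (n : nat) (tab : 'I_n -> 'I_n -> 'I_n) (K : nat) (a : nat -> nat).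
Hypothesis HK : K < 16 + n.
Local Notation AB := (16 + n + n + n).

Definition FI i m := m 0 = AB /\ m 11 = 1 /\ m 5 = i /\ i <= K /\ m AB = K /\
  (forall j, 0 < j <= K -> m (AB + j) = a j) /\ (forall j, i < j <= K -> m j = a j).

Definition FQ m := m 0 = AB /\ m AB = K /\
  (forall j, 0 < j <= K -> m (AB + j) = a j) /\ (forall j, 15 < j <= K -> m j = a j).

Lemma floop k i m : i - 15 <= k -> FI i m ->
  reach prog tab (State 52 m) (fun s => pc s = 60 /\ FQ (Defs.mem s)) (7 * (i - 15) + 3).
Proof.
elim: k i m => [|k IH] i m Hk [E0 [E11 [E5 [HiK [EAB [HA Hj]]]]]];
  case: (leqP i 15) => Hi.
- apply: (reach_weaken (b := 3)); first by lia.
  stp; jf; first by rd; rewrite E5.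
  stp; apply: reach_done; split => //; do 3 (split; first by rd).
  by move=> j Hj'; rd; apply: Hj; lia.
- lia.
- apply: (reach_weaken (b := 3)); first by lia.
  stp; jf; first by rd; rewrite E5.
  stp; apply: reach_done; split => //; do 3 (split; first by rd).
  by move=> j Hj'; rd; apply: Hj; lia.
- apply: (reach_weaken (b := 7 + (7 * (i.-1 - 15) + 3))); first by lia.
  stp; jt; first by rd; rewrite E5.
  stp; rd; rewrite E0 E5. stp; rd; rewrite HA; last by lia.
  stp; rd; rewrite E5. stp; rd; rewrite E5 E11. stp.
  apply: IH; first by lia.
  split; first by rd.
  split; first by rd.
  split; first by rd; rewrite subn1.
  split; first by lia.
  split; first by rd.
  split; first by move=> j Hj'; rd; apply: HA.
  move=> j Hj'; rd.
  case: (ltngtP j i) => Hji; [lia | | ].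
    by rd; apply: Hj; lia.
  by subst j; rd.
Qed.

Lemma prog_straight t : t < 15 ->
  [/\ nth IHalt prog (60 + 3 * t) = IConst (15 - t) (15 - t),
      nth IHalt prog (60 + 3 * t).+1 = IAdd (15 - t) (15 - t) 0 &
      nth IHalt prog (60 + 3 * t).+2 = ILoad (15 - t) (15 - t)].
Proof.
by do 15 (case: t => [|t]; first by move=> _; split); move=> /=.
Qed.

Definition SI m t m' := m' 0 = AB /\
  forall x, 0 < x -> m' x = if (15 - t < x) && (x <= 15) then m (AB + x) else m x.

Lemma sline k t m m' : 15 - t <= k -> t <= 15 -> SI m t m' ->
  reach prog tab (State (60 + 3 * t) m') (fun s => pc s = 105 /\ SI m 15 (Defs.mem s)) (3 * (15 - t)).
Proof.
elim: k t m' => [|k IH] t m' Hk Ht [E0 Ex].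
  have Et : t = 15 by lia.
  by apply: reach_done; split; [rewrite Et | rewrite -Et; split].
case: (ltnP t 15) => Ht'; last first.
  have Et : t = 15 by lia.
  by apply: reach_done; split; [rewrite Et | rewrite -Et; split].
have [I1 I2 I3] := prog_straight Ht'.
have -> : 3 * (15 - t) = (3 * (15 - t.+1)).+3 by lia.
apply: reach_step; first exact: st_const I1.
apply: reach_step; first exact: st_add I2.
apply: reach_step; first exact: st_load I3.
have -> : (60 + 3 * t).+3 = 60 + 3 * t.+1 by lia.
apply: IH; [lia | lia | ].
split; first by rd.
move=> x Hx; rd; rewrite E0.
case: (eqVneq x (15 - t)) => [->|Hne].
  rd; rewrite Ex; last by lia.
  have -> : (15 - t.+1 < 15 - t) && (15 - t <= 15) by apply/andP; lia.
  have -> : (15 - t < 15 - t + AB <= 15) = false by apply/negbTE/negP => /andP [H1 H2]; lia.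
  by rewrite addnC.

rewrite Ex //.
have -> : (15 - t.+1 < x) && (x <= 15) = (15 - t < x) && (x <= 15) by apply/idP/idP => /andP [H1 H2]; apply/andP; lia.
by [].
Qed.

Lemma final_phase m : m 13 = AB -> m 12 = 0 -> m 11 = 1 -> m 2 = K ->
  (forall j, 0 < j <= K -> m (AB + j) = a j) ->
  reach prog tab (State 49 m)
    (fun s => pc s = 106 /\ Defs.mem s 0 = K /\ forall j, 0 < j <= K -> Defs.mem s j = a j) (7 * K + 60).
Proof.
move=> E13 E12 E11 E2 HA.
apply: (reach_weaken (b := 3 + ((7 * (K - 15) + 3) + (3 * (15 - 0) + 1)))); first by lia.
stp; rd; rewrite E13 E12 addn0. stp; rd; rewrite E2. stp; rd; rewrite E2 E12 addn0.
apply: reach_trans.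
  apply: (@floop K K); first by lia.
  split; first by rd.
  split; first by rd.
  split; first by rd.
  split => //.
  split; first by rd.
  split; first by move=> j Hj; rd; apply: HA.
  by move=> j Hj; lia.
move=> [p4 m4] /= [-> [F0 [FAB [FA FJ]]]].
apply: reach_trans.
  apply: (@sline 15 0 m4 m4) => //.
  split => // x Hx; have -> : (15 - 0 < x) && (x <= 15) = false by apply/negbTE/negP => /andP [H1 H2]; lia.
  by [].
move=> [p5 m5] /= [-> [S0 Sx]].
apply: reach_step; first by apply: st_load; reflexivity.
apply: reach_done; split => //=.
split.
  rewrite upd_same S0 Sx; last by lia.
  have -> : (15 - 15 < AB) && (AB <= 15) = false by apply/negbTE/negP => /andP [H1 H2]; lia.
  exact: FAB.
move=> j Hj; rewrite upd_other; last by lia.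
rewrite Sx; last by lia.
case: ifP => Hj15; first by apply: FA.
by apply: FJ; move/negbT: Hj15; rewrite negb_and -leqNgt -ltnNge; lia.
Qed.
End Final.

Record MemInv n (m : nat -> nat) (S : {set 'I_n}) (L A : seq 'I_n) : Prop := MI {
  mi1 : m 1 = n; mi6 : m 6 = 16 + n; mi7 : m 7 = 16 + n + n; mi11 : m 11 = 1; mi12 : m 12 = 0;
  mi13 : m 13 = 16 + n + n + n; mi2 : m 2 = size A; mi3 : m 3 = size L;
  miM : forall x : 'I_n, m (16 + n + x) = (x \in S);
  miL : forall i, i < size L -> m (16 + n + n + i) = nth 0 (map val L) i;
  miA : forall j, j < size A -> m (16 + n + n + n + j.+1) = nth 0 (map val A) j }.

Lemma MemInv_tmp n m S L A d v : d < 16 -> d <> 1 -> d <> 2 -> d <> 3 -> d <> 6 -> d <> 7 -> d <> 11 -> d <> 12 -> d <> 13 ->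
  MemInv m S L A -> MemInv (n:=n) (upd m d v) S L A.
Proof.
move=> H0 H1 H1' H1'' H2 H3 H4 H5 H6 [E1 E2 E3 E4 E5 E6 E7 E8 E9 E10 E11].
constructor; rewrite ?updE; res_ifs => //.
- by move=> x; rewrite updE; res_ifs.
- by move=> i Hi; rewrite updE; res_ifs; apply: E10.
- by move=> j Hj; rewrite updE; res_ifs; apply: E11.
Qed.

Lemma MemInv_mark n m S L A (y : 'I_n) : MemInv m S L A -> MemInv (upd m (16 + n + y) 1) (y |: S) L A.
Proof.
have Hy := ltn_ord y.
move=> [E1 E2 E3 E4 E5 E6 E7 E8 E9 E10 E11].
constructor; rewrite ?updE; res_ifs => //.
- move=> x; have Hx := ltn_ord x; rewrite updE eqn_add2l in_setU1 -val_eqE /=.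
  by case: eqP => //= _; rewrite E9.
- by move=> i Hi; rewrite updE; res_ifs; apply: E10.
- by move=> j Hj; rewrite updE; res_ifs; apply: E11.
Qed.

Lemma MemInv_push n m S L A (y : 'I_n) : size L < n -> MemInv m S L A ->
  MemInv (upd (upd m (16 + n + n + size L) y) 3 (size L).+1) S (rcons L y) A.
Proof.
move=> Hs [E1 E2 E3 E4 E5 E6 E7 E8 E9 E10 E11].
constructor; rewrite ?updE; res_ifs => //.
- by rewrite size_rcons.
- by move=> x; have Hx := ltn_ord x; rewrite !updE; res_ifs.
- move=> i; rewrite size_rcons ltnS leq_eqVlt map_rcons nth_rcons size_map.
  case/orP => [/eqP ->|Hi]; first by rewrite !updE; res_ifs; rewrite ltnn eqxx.
  rewrite !updE; res_ifs.
  by rewrite Hi; apply: E10.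
- by move=> j Hj; rewrite !updE; res_ifs; apply: E11.
Qed.

Lemma MemInv_pushA n m S L A (g : 'I_n) v : size L <= n -> MemInv m S L A ->
  MemInv (upd (upd (upd m 2 (size A).+1) 8 v) (16 + n + n + n + (size A).+1) g) S L (rcons A g).
Proof.
move=> Hs [E1 E2 E3 E4 E5 E6 E7 E8 E9 E10 E11].
constructor; rewrite ?updE; res_ifs => //.
- by rewrite size_rcons.
- by move=> x; have Hx := ltn_ord x; rewrite !updE; res_ifs.
- by move=> i Hi; rewrite !updE; res_ifs; apply: E10.
- move=> j; rewrite size_rcons ltnS leq_eqVlt map_rcons nth_rcons size_map.
  case/orP => [/eqP ->|Hj]; first by rewrite !updE; res_ifs; rewrite ltnn eqxx.
  rewrite !updE; res_ifs.
  by rewrite Hj; apply: E11.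
Qed.

Import GroupScope.

Section Alg.
Variables (gT : finGroupType) (G : {group gT}) (n : nat) (e : 'I_n -> gT) (tab : 'I_n -> 'I_n -> 'I_n).
Hypotheses (Hab : abelian G) (Hinj : injective e) (HG : [set e i | i : 'I_n] = G)
  (Htab : forall i j, e (tab i j) = e i * e j).

Variable i0 : 'I_n.
Hypothesis Hi0 : e i0 = 1.

Lemma tab_self (x : 'I_n) : (tab x x == x) = (x == i0).
Proof.
apply/eqP/eqP => [H|->].
  apply: Hinj; rewrite Hi0; apply: (@mulgI _ (e x)).
  by rewrite -Htab H mulg1.
by apply: Hinj; rewrite Htab Hi0 mulg1.
Qed.

Lemma idloop k x m : i0 - x = k -> x <= i0 -> Pre n m -> m 4 = x ->
  reach prog tab (State 7 m) (fun s => pc s = 13 /\ Pre n (Defs.mem s) /\ Defs.mem s 4 = i0) (5*k + 4).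
Proof.
elim: k x m => [|k IH] x m Hk Hx Hm Hm4.
- have Ex : x = i0 by lia.
  have Hxn : x < n by rewrite Ex.
  have Et : tabN tab (m 4) (m 4) = i0.
    by rewrite Hm4 Ex tabN_ord; congr nat_of_ord; apply/eqP; rewrite tab_self.
  stp. rewrite Et. jf; first by rewrite !updE /= Hm4 Ex.
  jf; first by rewrite !updE /= Hm4 Ex.
  stp. apply: reach_done => /=; split => //; split.
    by apply: Pre_upd.
  by rewrite !updE /= Hm4 Ex.
- rewrite (_ : 5 * k.+1 + 4 = (5 * k + 4).+4.+1); last by lia.
  have Hxn : x < n by have := ltn_ord i0; lia.
  have Ne : tabN tab (m 4) (m 4) != x.
    rewrite Hm4 -[x]/(val (Ordinal Hxn)) tabN_ord; apply/negP => /eqP/val_inj/eqP.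
    by rewrite tab_self => /eqP/(congr1 val) /=; lia.
  stp. set v := tabN _ _ _.
  have Hjump : reach prog tab (State 11 (upd m 8 v))
     (fun s => pc s = 13 /\ Pre n (Defs.mem s) /\ Defs.mem s 4 = i0) (5 * k + 4).+2.
    stp. stp.
    apply: (IH x.+1); [lia | lia | | ].
      by apply: Pre_upd => //; apply: Pre_upd.
    case: Hm => _ [_ [_ [H11 _]]].
    by rewrite !updE /= Hm4 H11 addn1.
  case: (ltngtP v x) => Hv.
  + jt; first by rewrite !updE /= Hm4.
    apply: reach_weaken Hjump; lia.
  + jf; first by rewrite !updE /= Hm4; exact: ltnW.
    jt; first by rewrite !updE /= Hm4.
    apply: reach_weaken Hjump; lia.
  + by move: Ne; rewrite -/v Hv eqxx.
Qed.
End Alg.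


Lemma closure_lemma (gT : finGroupType) (G : {group gT}) (B X : {set gT}) (x : gT) :
  abelian G -> B \subset G -> x \in G -> <<B>> \subset X -> x \in X ->
  X \subset <<B :|: [set x]>> -> (forall y, y \in X -> y * x \in X) -> X = <<B :|: [set x]>>.
Proof.
move=> HA HB Hx HBX HxX HX Hcl.
apply/eqP; rewrite eqEsubset HX /=.
rewrite -joingE -joing_idl -joing_idr.
have Hc : commute <<B>> <[x]>.
  apply: normC; apply: cents_norm.
  apply: subset_trans (sub_abelian_cent HA _); first by rewrite gen_subG.
  by rewrite cycle_subG.
rewrite comm_joingE //.
apply/subsetP => w /mulsgP [h k Hh /cycleP [i ->] ->].
elim: i => [|i IH]; first by rewrite expg0 mulg1; apply: (subsetP HBX).
by rewrite expgSr mulgA; apply: Hcl.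
Qed.

Lemma double_card (gT : finGroupType) (H K : {group gT}) :
  H \proper K -> #|H| * 2 <= #|K|.
Proof.
move=> Hp; have Hs := proper_sub Hp; have Hlt := proper_card Hp.
have /dvdnP [q Hq] := cardSg Hs.
have Hpos : 0 < #|H| := cardG_gt0 H.
rewrite Hq in Hlt *.
case: q Hq Hlt => [|[|q]] _ Hlt; first by rewrite mul0n in Hlt.
  by rewrite mul1n ltnn in Hlt.
rewrite mulnC; apply: leq_mul => //.
Qed.


Section Alg.
Variables (gT : finGroupType) (G : {group gT}) (n : nat) (e : 'I_n -> gT) (tab : 'I_n -> 'I_n -> 'I_n).
Hypotheses (Hab : abelian G) (Hinj : injective e) (HG : [set e i | i : 'I_n] = G)
  (Htab : forall i j, e (tab i j) = e i * e j).

Definition gens (A : seq 'I_n) := [set e a | a in A].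

Lemma gens_rcons A g : gens (rcons A g) = gens A :|: [set e g].
Proof.
apply/setP => z; rewrite !inE; apply/imsetP/orP => [[a]|].
  rewrite mem_rcons inE => /orP [/eqP -> ->|Ha ->]; first by right.
  by left; apply: imset_f.
case=> [/imsetP [a Ha ->]|/eqP ->]; first by exists a => //; rewrite mem_rcons inE Ha orbT.
by exists g => //; rewrite mem_rcons inE eqxx.
Qed.

Lemma e_in_G (x : 'I_n) : e x \in G.
Proof. by rewrite -HG imset_f. Qed.

Lemma gens_sub A : gens A \subset G.
Proof. by apply/subsetP => z /imsetP [a _ ->]; apply: e_in_G. Qed.

Lemma card_set_uniq (L : seq 'I_n) : uniq L -> #|[set x in L]| = size L.
Proof. by move=> U; rewrite cardsE; apply/card_uniqP. Qed.

Lemma size_uniq_le (L : seq 'I_n) : uniq L -> size L <= n.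
Proof.
move=> U; rewrite -card_set_uniq //.
by apply: leq_trans (max_card _) _; rewrite card_ord.
Qed.

Lemma size_uniq_lt (L : seq 'I_n) (y : 'I_n) : uniq L -> y \notin L -> size L < n.
Proof.
move=> U Hy; rewrite -card_set_uniq //.
have Hp : [set x in L] \proper [set: 'I_n].
  rewrite properT; apply/eqP => E.
  by move: (in_setT y); rewrite -E inE (negbTE Hy).
by have := proper_card Hp; rewrite cardsT card_ord.
Qed.

Section BFS.
Variables (A0 : seq 'I_n) (g : 'I_n) (H : {set 'I_n}).
Hypotheses (HH : e @: H = <<gens A0>>) (HgH : g \notin H) (Hcard : 2 ^ (size A0) <= #|H|).

Definition BQ (L : seq 'I_n) (s : state) := pc s = 47 /\ exists S, MemInv (Defs.mem s) S L (rcons A0 g) /\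
  Defs.mem s 4 = g /\ uniq L /\ S = [set x in L] /\ H \subset S /\ e @: S = <<gens (rcons A0 g)>> /\
  2 ^ (size A0).+1 <= #|S|.

Lemma bfs_exit m S L : MemInv m S L (rcons A0 g) -> m 4 = g -> uniq L -> S = [set x in L] ->
  H \subset S -> g \in S -> e @: S \subset <<gens (rcons A0 g)>> ->
  (forall i, i < size L -> tab (nth g L i) g \in S) -> BQ L (State 47 m).
Proof.
move=> HM Hm4 U ES HS HgS Hsub Hcl; split => //; exists S; do 5 (split => //).
have Egen : e @: S = <<gens (rcons A0 g)>>.
  rewrite gens_rcons; apply: (closure_lemma Hab) => //.
  - exact: gens_sub.
  - exact: e_in_G.
  - by rewrite -HH; apply: imsetS.
  - by apply: imset_f.
  - by rewrite -gens_rcons.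
  move=> y /imsetP [x Hx ->]; rewrite -Htab; apply: imset_f.
  have : x \in L by rewrite ES inE in Hx.
  move=> HxL; have Hi : index x L < size L by rewrite index_mem.
  by have := Hcl _ Hi; rewrite nth_index.
split => //.
have Hp : <<gens A0>> \proper <<gens (rcons A0 g)>>.
  rewrite properEneq genS ?gens_rcons ?subsetUl // andbT.
  apply/eqP => E.
  have : e g \in <<gens A0 :|: [set e g]>> by apply: mem_gen; rewrite !inE eqxx orbT.
  by rewrite -E -HH mem_imset // (negbTE HgH).
have H1 : #|<<gens A0>>| * 2 <= #|<<gens (rcons A0 g)>>| := double_card Hp.
have H2 : #|<<gens A0>>| = #|H| by rewrite -HH card_imset.
have H3 : #|S| = #|<<gens (rcons A0 g)>>| by rewrite -Egen card_imset.
rewrite H3 expnS. lia.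
Qed.


Definition BI idx m S L := MemInv m S L (rcons A0 g) /\ m 4 = g /\ m 5 = idx /\
  idx <= size L /\ uniq L /\ S = [set x in L] /\ H \subset S /\ g \in S /\
  e @: S \subset <<gens (rcons A0 g)>> /\ (forall i, i < idx -> tab (nth g L i) g \in S).

Lemma bfs_body idx m S L : BI idx m S L -> idx < size L ->
  reach prog tab (State 33 m) (fun s => pc s = 33 /\ exists S' L', BI idx.+1 (Defs.mem s) S' L') 13.
Proof.
move=> [HM [Hm4 [Hm5 [Hidx [U [ES [HS [HgS [Hsub Hcl]]]]]]]]] Hlt.
have HLn := size_uniq_le U.
set y := nth g L idx.
set y' := tab y g.
have E7 := mi7 HM; have E6 := mi6 HM; have E11 := mi11 HM; have E12 := mi12 HM; have E3 := mi3 HM.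
have EL : m (16 + n + n + idx) = y by rewrite (miL HM Hlt) (nth_map g).
have EM : m (16 + n + y') = (y' \in S) by rewrite (miM HM).
have Hyn := ltn_ord y; have Hy'n := ltn_ord y'; have Hgn := ltn_ord g.
jt; first by rewrite Hm5 E3.
stp; rd. stp; rd. stp; rd. rewrite E7 Hm5 EL Hm4 tabN_ord -/y'.
stp; rd. rewrite E6. stp; rd. rewrite EM. stp; rd. rewrite Hm5 E11.
have Hm1 : MemInv (upd (upd (upd (upd (upd m 8 (16 + n + n + idx)) 9 y) 9 y') 8 (16 + n + y')) 10 (y' \in S))
     S L (rcons A0 g).
  by do 5 apply: MemInv_tmp => //.
case: (boolP (y' \in S)) => Hy'S.
- jt; first by rd; rewrite E12.
  apply: reach_done; split => //; exists S, L; split.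
    by apply: MemInv_tmp => //; rewrite Hy'S in Hm1.
  split; first by rd; rewrite Hm4.
  split; first by rd; rewrite addn1.
  do 6 (split => //).
  by move=> i; rewrite ltnS leq_eqVlt => /orP [/eqP ->|/Hcl] //.
- jf; first by rd; rewrite E12.
  have Hy'L : y' \notin L by move: Hy'S; rewrite ES inE.
  have HsL := size_uniq_lt U Hy'L.
  stp; rd. stp; rd; rewrite E7 E3. stp; rd. stp; rd; rewrite E3 E11 !addn1. stp.
  apply: reach_done; split => //; exists (y' |: S), (rcons L y'); split.
    rewrite /=; apply: MemInv_push => //; apply: MemInv_tmp => //; apply: MemInv_mark.
    by apply: MemInv_tmp => //; rewrite (negbTE Hy'S) in Hm1.
  split; first by rd; rewrite Hm4.
  split; first by rd.
  split; first by rewrite size_rcons.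
  split; first by rewrite rcons_uniq Hy'L U.
  split; first by apply/setP => z; rewrite !inE mem_rcons inE ES inE.
  split; first by apply: subset_trans HS (subsetU1 _ _).
  split; first by rewrite setU1r.
  have HyS : y \in S by rewrite ES inE mem_nth.
  split.
    rewrite imsetU1 subUset Hsub andbT sub1set /y' Htab; apply: groupM.
      by apply: (subsetP Hsub); apply: imset_f.
    by apply: mem_gen; rewrite gens_rcons !inE eqxx orbT.
  move=> i; rewrite ltnS leq_eqVlt => /orP [/eqP ->|Hi].
    by rewrite nth_rcons Hlt -/y setU11.
  by rewrite nth_rcons (ltn_trans Hi Hlt) setU1r // Hcl.
Qed.

Lemma bfs k idx m S L : n - idx <= k -> BI idx m S L ->
  reach prog tab (State 33 m) (fun s => exists Lf, BQ Lf s) (13 * (n - idx) + 2).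
Proof.
elim: k idx m S L => [|k IH] idx m S L Hk HB; have [HM [Hm4 [Hm5 [Hidx [U [ES [HS [HgS [Hsub Hcl]]]]]]]]] := HB;
  have HLn := size_uniq_le U; (case: (ltnP idx (size L)) => Hlt).
- lia.
- have Ei : idx = size L by lia.
  apply: (reach_weaken (b := 2)); first by lia.
  jf; first by rewrite Hm5 (mi3 HM) Ei.
  stp; apply: reach_done; exists L; apply: (@bfs_exit m S L) => //.
  by move=> i; rewrite -Ei; apply: Hcl.
- apply: (reach_weaken (b := 13 + (13 * (n - idx.+1) + 2))); first by lia.
  apply: reach_trans; first exact: (bfs_body HB).
  move=> [p' m'] /= [-> [S' [L' HB']]].
  by apply: IH HB'; lia.
- have Ei : idx = size L by lia.
  apply: (reach_weaken (b := 2)); first by lia.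
  jf; first by rewrite Hm5 (mi3 HM) Ei.
  stp; apply: reach_done; exists L; apply: (@bfs_exit m S L) => //.
  by move=> i; rewrite -Ei; apply: Hcl.
Qed.
End BFS.

Definition OI C m S L A := MemInv m S L A /\ m 4 = C /\ C <= n /\ uniq L /\ S = [set x in L] /\
  (forall x : 'I_n, x < C -> x \in S) /\ e @: S = <<gens A>> /\ 2 ^ size A <= #|S|.

Lemma OI_sizeA C m S L A : OI C m S L A -> size A <= trunc_log 2 n.
Proof.
move=> [_ [_ [_ [U [ES [_ [_ Hc]]]]]]]; apply: trunc_log_max => //.
apply: leq_trans Hc _; rewrite ES card_set_uniq //; exact: size_uniq_le.
Qed.

Lemma outer_step C m S L A (HC : C < n) : OI C m S L A ->
  (Ordinal HC \in S ->
    reach prog tab (State 19 m) (fun s => pc s = 19 /\ OI C.+1 (Defs.mem s) S L A) 6) /\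
  (Ordinal HC \notin S ->
    reach prog tab (State 19 m) (fun s => pc s = 19 /\ exists S' L', OI C.+1 (Defs.mem s) S' L' (rcons A (Ordinal HC))) (13 * n + 17)).
Proof.
move=> HO; have [HM [Hm4 [HCn [U [ES [Hlow [Egen Hcard]]]]]]] := HO.
set c := Ordinal HC.
have E7 := mi7 HM; have E6 := mi6 HM; have E11 := mi11 HM; have E12 := mi12 HM; have E3 := mi3 HM.
have E2 := mi2 HM; have E13 := mi13 HM; have E1 := mi1 HM.
have EM : m (16 + n + C) = (c \in S) by rewrite -(miM HM).
have HLn := size_uniq_le U.
split => Hc.
- jt; first by rewrite Hm4 E1.
  stp; rd; rewrite E6 Hm4. stp; rd; rewrite EM Hc.
  jt; first by rd; rewrite E12.
  stp; rd; rewrite Hm4 E11. stp.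
  apply: reach_done; split => //.
  split; first by do 3 apply: MemInv_tmp => //.
  split; first by rd; rewrite addn1.
  do 3 (split => //).
  split; last by [].
  move=> x; rewrite ltnS leq_eqVlt => /orP [/eqP Hx|/Hlow] //.
  by have -> : x = c by apply: val_inj.
have HcL : c \notin L by move: Hc; rewrite ES inE.
have HsL := size_uniq_lt U HcL.
apply: (reach_weaken (b := 13 + ((13 * (n - 0) + 2) + 2))); first by lia.
jt; first by rewrite Hm4 E1.
stp; rd; rewrite E6 Hm4. stp; rd; rewrite EM (negbTE Hc).
jf; first by rd; rewrite E12.
stp; rd; rewrite E2 E11 addn1. stp; rd; rewrite E13. stp; rd; rewrite Hm4.
stp; rd; rewrite E6 Hm4. stp; rd; rewrite E11. stp; rd; rewrite E7 E3. stp; rd; rewrite Hm4.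
stp; rd; rewrite E3 E11 addn1. stp.
apply: reach_trans.
  apply: (@bfs A c S _ _ _ n 0 _ (c |: S) (rcons L c)) => //; first by rewrite subn0.
  split.
    apply: MemInv_tmp => //; apply: (@MemInv_push _ _ _ _ _ c) => //; apply: MemInv_tmp => //.
    apply: (@MemInv_mark _ _ _ _ _ c); apply: MemInv_tmp => //; apply: (@MemInv_pushA _ _ _ _ _ c) => //.
    by do 2 apply: MemInv_tmp => //.
  split; first by rd; rewrite Hm4.
  split; first by rd.
  split => //.
  split; first by rewrite rcons_uniq HcL U.
  split; first by apply/setP => z; rewrite !inE mem_rcons inE ES inE.
  split; first exact: subsetU1.
  split; first exact: setU11.
  split => //.
  rewrite imsetU1 subUset sub1set mem_gen ?gens_rcons ?inE ?eqxx ?orbT //=.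
  by rewrite Egen genS // subsetUl.
move=> [p' m'] [Lf [/= -> [S' [HM' [Hm4' [U' [ES' [HS' [Egen' Hc']]]]]]]]].
have E11' := mi11 HM'.
stp; rd; rewrite Hm4' E11' addn1. stp.
apply: reach_done; split => //; exists S', Lf; split.
  by apply: MemInv_tmp.
split; first by rd.
do 3 (split => //).
have HcS' : c \in S'.
  by rewrite -(mem_imset _ _ Hinj) Egen'; apply: mem_gen; rewrite gens_rcons !inE eqxx orbT.
split.
  move=> x; rewrite ltnS leq_eqVlt => /orP [/eqP Hx|/Hlow /(subsetP HS')] //.
  by have -> : x = c by apply: val_inj.
by rewrite size_rcons.
Qed.



Lemma card_G : #|G| = n.
Proof. by rewrite -HG card_imset // card_ord. Qed.

Lemma gen_room C m S L A (c : 'I_n) : OI C m S L A -> c \notin S -> (size A).+1 <= trunc_log 2 n.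
Proof.
move=> [_ [_ [_ [U [ES [_ [Egen Hc]]]]]]] HcS; apply: trunc_log_max => //.
have Hp : <<gens A>> \proper G.
  rewrite properEneq gen_subG gens_sub andbT; apply/eqP => E.
  by move: (e_in_G c); rewrite -E -Egen mem_imset // (negbTE HcS).
have H1 : #|<<gens A>>| * 2 <= #|G| := double_card Hp.
have H2 : #|<<gens A>>| = #|S| by rewrite -Egen card_imset.
rewrite expnS; move: H1; rewrite H2 card_G; lia.
Qed.

Lemma outer k C m S L A : n - C <= k -> OI C m S L A ->
  reach prog tab (State 19 m) (fun s => pc s = 49 /\ exists S L A, OI n (Defs.mem s) S L A)
    (6 * (n - C) + (trunc_log 2 n - size A) * (13 * n + 17) + 2).
Proof.
elim: k C m S L A => [|k IH] C m S L A Hk HO; have [HM [Hm4 [HCn _]]] := HO;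
  (case: (ltnP C n) => HC).
- lia.
- apply: (reach_weaken (b := 2)); first exact: leq_addl.
  jf; first by rewrite Hm4 (mi1 HM).
  stp; apply: reach_done; split => //; exists S, L, A.
  by have -> : n = C by lia.
- have [Hs Hg] := outer_step HC HO.
  case: (boolP (Ordinal HC \in S)) => Hc.
    apply: (reach_weaken (b := 6 + (6 * (n - C.+1) + (trunc_log 2 n - size A) * (13 * n + 17) + 2))); first by lia.
    apply: reach_trans; first exact: Hs.
    move=> [p' m'] /= [-> HO']; apply: IH HO'; lia.
  have Hroom := gen_room HO Hc.
  apply: (reach_weaken (b := (13 * n + 17) + (6 * (n - C.+1) + (trunc_log 2 n - (size A).+1) * (13 * n + 17) + 2))).
    have -> : trunc_log 2 n - size A = (trunc_log 2 n - (size A).+1).+1 by lia.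
    rewrite mulSn; lia.
  apply: reach_trans; first exact: Hg.
  move=> [p' m'] /= [-> [S' [L' HO']]].
  by rewrite -(size_rcons A (Ordinal HC)); apply: IH HO'; lia.
- apply: (reach_weaken (b := 2)); first exact: leq_addl.
  jf; first by rewrite Hm4 (mi1 HM).
  stp; apply: reach_done; split => //; exists S, L, A.
  by have -> : n = C by lia.
Qed.

Lemma phaseC (i0 : 'I_n) (Hi0 : e i0 = 1) m : Pre n m -> m 4 = i0 ->
  reach prog tab (State 13 m) (fun s => pc s = 19 /\ OI 0 (Defs.mem s) [set i0] [:: i0] [::]) 6.
Proof.
move=> [E1 [E6 [E7 [E11 [E12 [E13 EZ]]]]]] Hm4.
have Hi0n := ltn_ord i0.
stp; rd; rewrite E6 Hm4. stp; rd; rewrite E11. stp; rd; rewrite E7 Hm4.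
stp. stp. stp.
apply: reach_done; split => //.
split.
  constructor; try by rd.
  - move=> x; have Hx := ltn_ord x; rd.
    rewrite eqn_add2l in_set1 -val_eqE /=.
    case: eqP => _ //.
    rd; apply: EZ; lia.
  - move=> i; rewrite ltnS leqn0 => /eqP ->; by rd.
split; first by rd.
split => //.
split => //.
split; first by apply/setP => z; rewrite !inE.
split => //.
split.
  rewrite imset_set1 Hi0.
  have -> : gens [::] = set0 by apply/setP => z; rewrite inE; apply/imsetP => [[a]].
  by rewrite gen0.
by rewrite cards1.
Qed.

Lemma main_inner : exists (m : nat -> nat) (A : seq 'I_n),
      run prog tab (100 * n * (trunc_log 2 n).+1 ^ 1 + 100) (init n) = Some m /\
      [seq val a | a <- A] = [seq m i | i <- iota 1 (m 0)] /\
      size A <= trunc_log 2 n /\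
      <<[set e a | a in A]>> = G.
Proof.
have [i0 _ Hi0] : exists2 i0 : 'I_n, true & e i0 = 1.
  by move: (group1 G); rewrite -HG => /imsetP [x _ Hx]; exists x.
have Hi0n := ltn_ord i0.
set T := trunc_log 2 n.
have R : reach prog tab (init n)
  (fun s => pc s = 106 /\ exists A : seq 'I_n, Defs.mem s 0 = size A /\
     (forall j, 0 < j <= size A -> Defs.mem s j = nth 0 [seq val a | a <- A] j.-1) /\
     size A <= T /\ <<[set e a | a in A]>> = G)
  (7 + (5 * (i0 - 0) + 4) + 6 + (6 * (n - 0) + (T - 0) * (13 * n + 17) + 2) + (7 * T + 60)).
  apply: reach_trans.
    apply: reach_trans.
      apply: reach_trans.
        apply: reach_trans; first exact: phaseA.
        move=> [p m] /= [-> [HP Hm4]].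
        by apply: (idloop Hab Hinj Htab Hi0) => //; rewrite subn0.
      move=> [p m] /= [-> [HP Hm4]].
      exact: (phaseC Hi0 HP Hm4).
    move=> [p m] /= [-> HO].
    by apply: (@outer n 0 m _ _ _ _ HO); rewrite subn0.
  move=> [p m] /= [-> [S [L [A HO]]]].
  have HT := OI_sizeA HO.
  have [HM [_ [_ [U [ES [Hlow [Egen _]]]]]]] := HO.
  apply: (reach_weaken (b := 7 * size A + 60)); first by lia.
  apply: reach_post.
    apply: (@final_phase n tab (size A) (fun j => nth 0 [seq val a | a <- A] j.-1)).
    - have [_ [_ [_ [U' [ES' [_ [_ Hc]]]]]]] := HO.
      have : size A < n.
        apply: leq_trans (ltn_expl _ (isT : 1 < 2)) (leq_trans Hc _).
        by rewrite ES' card_set_uniq // size_uniq_le.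
      lia.
    - exact: mi13 HM.
    - exact: mi12 HM.
    - exact: mi11 HM.
    - exact: mi2 HM.
    - by move=> j /andP [Hj1 Hj2]; have := miA HM (j := j.-1); rewrite prednK //; apply; lia.
  move=> [p' m'] /= [-> [H0 Hj]]; split => //; exists A; do 3 (split => //).
  have ES2 : S = [set: 'I_n] by apply/setP => x; rewrite inE; apply: Hlow.
  rewrite ES2 in Egen; rewrite -Egen -HG; apply/setP => z; apply/imsetP/imsetP => [][x _ ->]; by exists x.
have [t [s' [Ht [Hex [Hpc [A [H0 [Hj [HAT Hgen]]]]]]]]] := R.
exists (Defs.mem s'), A.
split.
  have Hb : t < 100 * n * T.+1 ^ 1 + 100.
    apply: leq_ltn_trans Ht _; rewrite expn1.
    have : T <= n * T by rewrite leq_pmull //; lia.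
    nia.
  have -> : 100 * n * T.+1 ^ 1 + 100 = t + (100 * n * T.+1 ^ 1 + 100 - t - 1).+1 by lia.
  rewrite (exec_run _ Hex).
  case: s' Hex Hpc H0 Hj => p m /= _ -> _ _.
  by rewrite st_halt.
split; last by [].
rewrite H0; apply: (@eq_from_nth _ 0); first by rewrite !size_map size_iota.
move=> i; rewrite size_map => Hi.
rewrite (nth_map 0) ?size_iota // nth_iota // Hj; last by rewrite add1n ltnS Hi.
by rewrite add1n.
Qed.

End Alg.


Theorem mainTheorem5 :
  exists (P : program) (c k : nat),
  forall (gT : finGroupType) (G : {group gT}) (n : nat)
         (e : 'I_n -> gT) (tab : 'I_n -> 'I_n -> 'I_n),
    abelian G ->
    injective e ->
    [set e i | i : 'I_n] = G ->
    (forall i j, e (tab i j) = e i * e j) ->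
    exists (m : nat -> nat) (A : seq 'I_n),
      run P tab (c * n * (trunc_log 2 n).+1 ^ k + c) (init n) = Some m /\
      [seq val a | a <- A] = [seq m i | i <- iota 1 (m 0)] /\
      size A <= trunc_log 2 n /\
      <<[set e a | a in A]>> = G.
Proof.
exists prog, 100%N, 1%N => gT G n e tab Hab Hinj HG Htab.
exact: (main_inner Hab Hinj HG Htab).
Qed.
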